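(* Consider the system $$\begin{bmatrix}\dot q\\ \dot p\end{bmatrix}=J\begin{bmatrix}\frac{\partial H}{\partial q}(q,p)\\ \frac{\partial H}{\partial p}(q,p)\end{bmatrix},\qquad J=\begin{bmatrix}0 & B_s^T\\ -B_s & -B_dRB_d^T\end{bmatrix},\quad (q,p)\in\mathbb{R}^{M_s}\times\mathbb{R}^{N}.$$ A differentiable function $C(q,p)$ is a Casimir function, i.e. $\begin{bmatrix}\frac{\partial^T C}{\partial q}(q,p) & \frac{\partial^T C}{\partial p}(q,p)\end{bmatrix}J=0$ for all $(q,p)$, if and only if for all $(q,p)$ $$\tfrac{\partial C}{\partial p}(q,p)\in\operatorname{span}\mathbb{1},\qquad \tfrac{\partial C}{\partial q}(q,p)\in\ker B_s.$$
   Context: Mass-spring-damper setting: a directed graph with $N$ vertices whose edges are split into $M_s$ spring edges and $M_d$ damper edges; its incidence matrix is $B=[B_s\ B_d]$ ($N\times(M_s+M_d)$, entry $1$ if the edge originates at the vertex, $-1$ if it points towards it, $0$ otherwise). Standing assumption: the graph is connected, equivalently $\ker B_s^T\cap\ker B_d^T=\operatorname{span}\mathbb{1}$, $\mathbb{1}\in\mathbb{R}^N$ the all-ones vector. $R$ is the $M_d\times M_d$ diagonal matrix of positive damping constants. $\frac{\partial C}{\partial q}$ denotes the column gradient and $\frac{\partial^T C}{\partial q}$ the row gradient. *)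

(* Defs.v *)
From HB Require Import structures.
From mathcomp Require Import all_boot all_order all_algebra.
From mathcomp Require Import all_classical all_reals all_analysis.
Set Implicit Arguments. Unset Strict Implicit. Unset Printing Implicit Defensive.
Import Order.TTheory GRing.Theory Num.Theory.
Import numFieldNormedType.Exports.
Local Open Scope ring_scope.

(* B : 'M_(N, M) is (part of) the incidence matrix of a directed graph without
   self-loops: every column (edge) has exactly one entry 1 (origin vertex),
   exactly one entry -1 (target vertex), all others 0. *)
Definition incidence_cols (R : realType) (N M : nat) (B : 'M[R]_(N, M)) : Prop :=
  forall j : 'I_M, exists i k : 'I_N,
    [/\ i != k, B i j = 1, B k j = -1 & forall l, l != i -> l != k -> B l j = 0].

Definition ones (R : realType) (N : nat) : 'cV[R]_N := const_mx 1.

Definition grad_q (R : realType) (Ms N : nat) (C : 'cV[R]_Ms * 'cV[R]_N -> R)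
  (x : 'cV[R]_Ms * 'cV[R]_N) : 'cV[R]_Ms :=
  \col_(i < Ms) 'D_((delta_mx i 0 : 'cV[R]_Ms), (0 : 'cV[R]_N)) C x.

Definition grad_p (R : realType) (Ms N : nat) (C : 'cV[R]_Ms * 'cV[R]_N -> R)
  (x : 'cV[R]_Ms * 'cV[R]_N) : 'cV[R]_N :=
  \col_(i < N) 'D_((0 : 'cV[R]_Ms), (delta_mx i 0 : 'cV[R]_N)) C x.

Definition Jmat (R : realType) (N Ms Md : nat) (Bs : 'M[R]_(N, Ms))
  (Bd : 'M[R]_(N, Md)) (Rd : 'M[R]_Md) : 'M[R]_(Ms + N) :=
  block_mx (0 : 'M[R]_(Ms, Ms)) Bs^T (- Bs) (- (Bd *m Rd *m Bd^T)).

Definition casimir (R : realType) (N Ms Md : nat) (Bs : 'M[R]_(N, Ms))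
  (Bd : 'M[R]_(N, Md)) (Rd : 'M[R]_Md) (C : 'cV[R]_Ms * 'cV[R]_N -> R) : Prop :=
  forall x : 'cV[R]_Ms * 'cV[R]_N,
    row_mx (grad_q C x)^T (grad_p C x)^T *m Jmat Bs Bd Rd = 0.

(* Main.v *)
Require Import Defs.
From HB Require Import structures.
From mathcomp Require Import all_boot all_order all_algebra.
From mathcomp Require Import all_classical all_reals all_analysis.
Import Order.TTheory GRing.Theory Num.Theory.
Import numFieldNormedType.Exports.
Local Open Scope ring_scope.

Lemma key (R : realType) (N Ms Md : nat)
  (Bs : 'M[R]_(N, Ms)) (Bd : 'M[R]_(N, Md)) (r : 'rV[R]_Md)
  (hconn : forall x : 'cV[R]_N,
     (Bs^T *m x = 0 /\ Bd^T *m x = 0) <-> exists c : R, x = c *: ones R N)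
  (hr : forall j : 'I_Md, 0 < r 0 j) (a : 'cV[R]_Ms) (b : 'cV[R]_N) :
  row_mx a^T b^T *m Jmat Bs Bd (diag_mx r) = 0 <->
  ((exists c : R, b = c *: ones R N) /\ Bs *m a = 0).
Proof.
rewrite /Jmat mul_row_block mulmx0 add0r.
split.
  move/eqP; rewrite row_mx_eq0 => /andP[/eqP H1 /eqP H2].
  have E1 : Bs^T *m b = 0.
    by apply: trmx_inj; rewrite trmx_mul trmxK trmx0 -[LHS]opprK -mulmxN H1 oppr0.
  move/eqP: H2; rewrite mulmxN subr_eq0 => /eqP H2.
  set v := Bd^T *m b.
  have Ev : b^T *m Bd = v^T by rewrite /v trmx_mul trmxK.
  have H3 : v^T *m diag_mx r *m v = 0.
    rewrite -Ev /v !mulmxA; rewrite !mulmxA in H2; rewrite -H2.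
    by rewrite -mulmxA E1 mulmx0.
  have v0 : v = 0.
    apply/matrixP => j k; rewrite (ord1 k) mxE.
    move/matrixP: H3 => /(_ 0 0); rewrite !mxE.
    under eq_bigr do rewrite mul_mx_diag mxE.
    move=> /eqP; rewrite psumr_eq0; last first.
      move=> i _; rewrite mulrC mulrA; apply: mulr_ge0; last exact: ltW.
      by rewrite [v^T _ _]mxE -expr2 sqr_ge0.
    move=> /allP /(_ j (mem_index_enum _)) /=; rewrite !mxE.
    rewrite mulrC mulrA -expr2 mulf_eq0 (gt_eqF (hr j)) orbF sqrf_eq0.
    by move/eqP.
  split; first by apply/hconn; split.
  apply: trmx_inj; rewrite trmx_mul trmx0 H2 !mulmxA Ev v0 trmx0 !mul0mx //.
move=> [[c ->] Ha].
have [HO1 HO2] : Bs^T *m ones R N = 0 /\ Bd^T *m ones R N = 0.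
  by apply/hconn; exists 1; rewrite scale1r.
apply/eqP; rewrite row_mx_eq0; apply/andP; split; apply/eqP.
  have Es : (c *: ones R N)^T *m Bs = 0.
    apply: trmx_inj; rewrite trmx0 trmx_mul trmxK -scalemxAr HO1 scaler0 //.
  by rewrite mulmxN Es oppr0.
have Eb : (c *: ones R N)^T *m Bd = 0.
  apply: trmx_inj; rewrite trmx0 trmx_mul trmxK -scalemxAr HO2 scaler0 //.
have Ea : a^T *m Bs^T = 0 by apply: trmx_inj; rewrite trmx_mul !trmxK Ha trmx0.
by rewrite Ea mulmxN !mulmxA Eb !mul0mx oppr0 addr0.
Qed.

Theorem proposition4p2 (R : realType) (N Ms Md : nat)
  (Bs : 'M[R]_(N, Ms)) (Bd : 'M[R]_(N, Md)) (r : 'rV[R]_Md)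
  (hBs : incidence_cols Bs) (hBd : incidence_cols Bd)
  (hconn : forall x : 'cV[R]_N,
     (Bs^T *m x = 0 /\ Bd^T *m x = 0) <-> exists c : R, x = c *: ones R N)
  (hr : forall j : 'I_Md, 0 < r 0 j)
  (C : 'cV[R]_Ms * 'cV[R]_N -> R)
  (hC : forall x : 'cV[R]_Ms * 'cV[R]_N, differentiable C x) :
  casimir Bs Bd (diag_mx r) C <->
  (forall x : 'cV[R]_Ms * 'cV[R]_N,
     (exists c : R, grad_p C x = c *: ones R N) /\ Bs *m grad_q C x = 0).
Proof.
split=> H x.
  by apply: (proj1 (@key R N Ms Md Bs Bd r hconn hr (grad_q C x) (grad_p C x))); apply: H.
by apply: (proj2 (@key R N Ms Md Bs Bd r hconn hr (grad_q C x) (grad_p C x))); apply: H.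
Qed.
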